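(* Assume the Framework (the Purification Postulate is not needed). Let $\rho_1,\rho_2,\rho_3\in\mathfrak S_1(\mathrm A)$ with $\rho_1\ne\rho_3$ and $\rho_2=p\rho_1+(1-p)\rho_3$ for some $0<p<1$, and let $\Psi_i\in\mathfrak S_1(\mathrm A\mathrm B)$ be a purification of $\rho_i$ for $i=1,2,3$ (i.e. $\Psi_i$ pure with $(\mathcal I_{\mathrm A}\otimes e_{\mathrm B})\Psi_i=\rho_i$). Then for no finite $N\ge1$ is there a transformation $\mathcal C\in\mathfrak T(\mathrm A^{\otimes N},\mathrm A\mathrm B)$ such that $\mathcal C(\rho_i^{\otimes N})=\Psi_i$ for all $i=1,2,3$.
   Context: Framework. We work in an operational-probabilistic theory: there is a collection of systems $\mathrm A,\mathrm B,\dots$, closed under a composition $\mathrm A\mathrm B$ (associative, symmetric up to a reversible swap, with a trivial system $\mathrm I$ satisfying $\mathrm A\mathrm I=\mathrm A$); for each pair of systems a set $\mathfrak T(\mathrm A,\mathrm B)$ of transformations; a test from $\mathrm A$ to $\mathrm B$ is a finite collection $\{\mathcal C_i\}_{i\in X}\subseteq\mathfrak T(\mathrm A,\mathrm B)$, and every transformation belongs to some test. Tests are closed under sequential composition, parallel composition ($\otimes$), coarse-graining (summing outcomes over the blocks of a partition of $X$) and conditioning (choosing the next test depending on the outcome of the previous one). States of $\mathrm A$ are the elements of $\mathfrak S(\mathrm A):=\mathfrak T(\mathrm I,\mathrm A)$, effects are the elements of $\mathfrak T(\mathrm A,\mathrm I)$, and transformations $\mathrm I\to\mathrm I$ are probabilities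 in $[0,1]$ (those of a test sum to $1$; composition is multiplication). An effect $a$ and a state $\rho$ give the probability $(a|\rho)$. States (effects) are identified when they give equal probabilities on all effects (states); transformations $\mathcal C,\mathcal C'$ are identified when $\mathcal C\otimes\mathcal I_{\mathrm S}$ and $\mathcal C'\otimes\mathcal I_{\mathrm S}$ act identically on all states of $\mathrm A\mathrm S$ for every system $\mathrm S$. States span a finite-dimensional real vector space $\mathfrak S_{\mathbb R}(\mathrm A)$, transformations act linearly, and $\mathfrak T_{\mathbb R}(\mathrm A,\mathrm B)$ is the real span of $\mathfrak T(\mathrm A,\mathrm B)$. Standing assumptions: (i) causality: each system $\mathrm A$ has a unique deterministic effect $e_{\mathrm A}$ (the effect forming a one-outcome observation test), and $e_{\mathrm A\mathrm B}=e_{\mathrm A}\otimes e_{\mathrm B}$; (ii) local discriminability: if two states of $\mathrm A\mathrm B$ differ, some product effect $a\otimes b$ gives them different probabilities; (iii) all sets of states are closed, the theory is not deterministic (hence all sets of states, effects and transformations are convex), and perfectly distinguishable states exist. A state $\rho$ is normalized if $(e|\rho)=1$; $\mathfrak S_1(\mathrm A)$ is the set of normalized states. A channel is a $\mathcal C\in\mathfrak T(\mathrm A,\mathrm B)$ with $e_{\mathrm B}\circ\mathcal C=e_{\mathrm A}$. A channel $\mathcal U\in\mathfrak T(\mathrm A,\mathrm B)$ is reversible if some channel $\mathcal W\in\mathfrak T(\mathrm B,\mathrm A)$ satisfies $\mathcal W\mathcal U=\mathcal I_{\mathrm A}$, $\mathcal U\mathcal W=\mathcal I_{\mathrm B}$;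 $\mathbf G_{\mathrm A}$ is the group of reversible channels on $\mathrm A$. The marginal of a state $\sigma$ of $\mathrm A\mathrm B$ on $\mathrm A$ is $(\mathcal I_{\mathrm A}\otimes e_{\mathrm B})\sigma$. Refinement. For $\mathcal C\in\mathfrak T(\mathrm A,\mathrm B)$, write $\mathcal D\prec\mathcal C$ if there are a test $\{\mathcal D_j\}_{j\in Y}$ and $Y_0\subseteq Y$ with $\mathcal C=\sum_{j\in Y_0}\mathcal D_j$ and $\mathcal D\in\{\mathcal D_j\}_{j\in Y_0}$; the refinement set is $D_{\mathcal C}=\{\mathcal D:\mathcal D\prec\mathcal C\}$. $\mathcal C$ is atomic if $\mathcal D\prec\mathcal C$ implies $\mathcal D=\lambda\mathcal C$ for some $\lambda\in[0,1]$. A pure state is an atomic state; a state is mixed otherwise. *)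

(* Defs.v *)
(* An abstract operational-probabilistic theory (OPT),
   presented through its linear (matrix) representation over a real field R.
   Conventions: a transformation A -> B is a matrix 'M_(dim A, dim B) acting on
   row vectors by right multiplication; "D after C" is C *m D; states of A are
   matrices 'M_(dim I, dim A), effects 'M_(dim A, dim I), with dim I = 1, so that
   probabilities are 1x1 matrices read off by the trace. *)
From HB Require Import structures.
From mathcomp Require Import all_boot all_order all_algebra.
Unset Printing Implicit Defensive.
Import Order.TTheory GRing.Theory Num.Theory.
Local Open Scope ring_scope.

Record OPT (R : realFieldType) := Opt {
  sys : Type;
  sI : sys;
  scomp : sys -> sys -> sys;
  dim : sys -> nat;                           (* dim of the real span of states *)
  transf : forall A B : sys, pred 'M[R]_(dim A, dim B);
  is_test : forall A B : sys, seq 'M[R]_(dim A, dim B) -> Prop;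
  par : forall A B C D : sys, 'M[R]_(dim A, dim B) -> 'M[R]_(dim C, dim D) ->
          'M[R]_(dim (scomp A C), dim (scomp B D));
  sswap : forall A B : sys, 'M[R]_(dim (scomp A B), dim (scomp B A));
  compA : forall A B C, scomp (scomp A B) C = scomp A (scomp B C);
  compI : forall A, scomp A sI = A;
}.

Arguments sys {R} _.
Arguments sI {R} _.
Arguments scomp {R} _.
Arguments dim {R} _.
Arguments transf {R} _ A B.
Arguments is_test {R _ A B}.
Arguments par {R _ A B C D}.
Arguments sswap {R} _ A B.
Arguments compA {R} _ A B C.
Arguments compI {R} _ A.

Definition Mx {R : realFieldType} (T : OPT R) (A B : sys T) := 'M[R]_(dim T A, dim T B).

Definition dimAI {R : realFieldType} (T : OPT R) (A : sys T) :
  dim T (scomp T A (sI T)) = dim T A := congr1 (dim T) (compI T A).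

(* D ≺ C : D is an outcome, in a subset Y0 of outcomes, of a test whose
   coarse-graining over Y0 is C. *)
Definition refines {R : realFieldType} {T : OPT R} {A B : sys T} (D C : Mx T A B) :=
  exists ds : seq (Mx T A B), is_test ds /\
    exists m : bitseq, C = \sum_(d <- mask m ds) d /\ D \in mask m ds.

Definition atomic {R : realFieldType} {T : OPT R} {A B : sys T} (C : Mx T A B) :=
  C \in transf T A B /\
  forall D : Mx T A B, refines D C -> exists l : R, 0 <= l <= 1 /\ D = l *: C.

Definition is_state {R : realFieldType} {T : OPT R} {A : sys T} (rho : Mx T (sI T) A) :=
  rho \in transf T (sI T) A.

Definition pure_state {R : realFieldType} {T : OPT R} {A : sys T} (rho : Mx T (sI T) A) :=
  atomic rho.

Definition deterministic {R : realFieldType} {T : OPT R} {A : sys T} (e : Mx T A (sI T)) :=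
  is_test [:: e].

Definition normalized {R : realFieldType} {T : OPT R} {A : sys T} (rho : Mx T (sI T) A) :=
  is_state rho /\ forall e : Mx T A (sI T), deterministic e -> \tr (rho *m e) = 1.

(* (I_A ⊗ e_B) Psi = rho   (as states of A I = A) *)
Definition marginal_is {R : realFieldType} {T : OPT R} {A B : sys T}
  (Psi : Mx T (sI T) (scomp T A B)) (rho : Mx T (sI T) A) :=
  forall e : Mx T B (sI T), deterministic e ->
    castmx (erefl, dimAI T A) (Psi *m par (1%:M : Mx T A A) e) = rho.

Definition purification {R : realFieldType} {T : OPT R} {A B : sys T}
  (rho : Mx T (sI T) A) (Psi : Mx T (sI T) (scomp T A B)) :=
  normalized Psi /\ pure_state Psi /\ marginal_is Psi rho.

(* tensor product of states, as a state of AB (using I I = I) *)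
Definition tens_state {R : realFieldType} {T : OPT R} {A B : sys T}
  (rho : Mx T (sI T) A) (sigma : Mx T (sI T) B) : Mx T (sI T) (scomp T A B) :=
  castmx (dimAI T (sI T), erefl) (par rho sigma).

(* A^{⊗n}: I, A, AA, A(AA), ... *)
Fixpoint tpow {R : realFieldType} (T : OPT R) (A : sys T) (n : nat) : sys T :=
  match n with
  | 0 => sI T
  | S n' => match n' with 0 => A | _ => scomp T A (tpow T A n') end
  end.

Fixpoint spowS {R : realFieldType} {T : OPT R} {A : sys T} (rho : Mx T (sI T) A) (n : nat)
  : Mx T (sI T) (tpow T A n.+1) :=
  match n return Mx T (sI T) (tpow T A n.+1) with
  | 0 => rho
  | S n' => tens_state rho (spowS rho n')
  end.

Definition spow {R : realFieldType} {T : OPT R} {A : sys T} (rho : Mx T (sI T) A) (n : nat)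
  : Mx T (sI T) (tpow T A n) :=
  match n return Mx T (sI T) (tpow T A n) with
  | 0 => 1%:M
  | S n' => spowS rho n'
  end.

Definition OPT_axioms {R : realFieldType} (T : OPT R) : Prop :=
  (dim T (sI T) = 1%N) /\
      (forall A B (c : Mx T A B), c \in transf T A B <-> exists cs, is_test cs /\ c \in cs) /\
      (forall A, is_test [:: (1%:M : Mx T A A)]) /\
      (forall A B C (cs : seq (Mx T A B)) (ds : seq (Mx T B C)),
          is_test cs -> is_test ds -> is_test [seq c *m d | c <- cs, d <- ds]) /\
      (forall A B C D (cs : seq (Mx T A B)) (ds : seq (Mx T C D)),
          is_test cs -> is_test ds -> is_test [seq par c d | c <- cs, d <- ds]) /\
      (* coarse-graining over the blocks of a partition *)
      (forall A B (cs : seq (Mx T A B)) (k : nat) (l : 'I_(size cs) -> 'I_k),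
          is_test cs -> (forall j, exists i, l i = j) ->
          is_test [seq \sum_(i < size cs | l i == j) cs`_i | j <- enum 'I_k]) /\
      (forall A B C (cs : seq (Mx T A B)) (ds : nat -> seq (Mx T B C)),
          is_test cs -> (forall i, (i < size cs)%N -> is_test (ds i)) ->
          is_test (flatten [seq [seq cs`_i *m d | d <- ds i] | i <- iota 0 (size cs)])) /\
      (forall c : Mx T (sI T) (sI T), c \in transf T (sI T) (sI T) -> 0 <= \tr c <= 1) /\
      (forall cs : seq (Mx T (sI T) (sI T)), is_test cs -> \sum_(c <- cs) \tr c = 1)
  /\
      (forall A B C A' B' C' (f : Mx T A B) (g : Mx T B C) (f' : Mx T A' B') (g' : Mx T B' C'),
          par (f *m g) (f' *m g') = par f f' *m par g g') /\
      (forall A C, par (1%:M : Mx T A A) (1%:M : Mx T C C) = 1%:M) /\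
      (forall A B C D (a : R) (x y : Mx T A B) (z : Mx T C D),
          par (a *: x + y) z = a *: par x z + par y z) /\
      (forall A B C D (a : R) (z : Mx T A B) (x y : Mx T C D),
          par z (a *: x + y) = a *: par z x + par z y) /\
      (forall A B (f : Mx T A B),
          par f (1%:M : Mx T (sI T) (sI T)) = castmx (esym (dimAI T A), esym (dimAI T B)) f) /\
      (forall A B C D E F (f : Mx T A B) (g : Mx T C D) (h : Mx T E F),
          castmx (congr1 (dim T) (compA T A C E), congr1 (dim T) (compA T B D F))
                 (par (par f g) h) = par f (par g h)) /\
      (forall A B, is_test [:: sswap T A B] /\ sswap T A B *m sswap T B A = 1%:M) /\
      (forall A B C D (f : Mx T A B) (g : Mx T C D),
          par f g *m sswap T B D = sswap T A C *m par g f) /\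
      (forall A (x : Mx T (sI T) A), exists s : seq (R * Mx T (sI T) A),
          (forall q, q \in s -> q.2 \in transf T (sI T) A) /\ x = \sum_(q <- s) q.1 *: q.2) /\
      (forall A (x y : Mx T (sI T) A),
          (forall a, a \in transf T A (sI T) -> \tr (x *m a) = \tr (y *m a)) -> x = y).

Definition Framework {R : realFieldType} (T : OPT R) : Prop :=
  OPT_axioms T /\
      (forall A, exists! e : Mx T A (sI T), deterministic e) /\
      (forall A B (eA : Mx T A (sI T)) (eB : Mx T B (sI T)),
          deterministic eA -> deterministic eB ->
          deterministic (castmx (erefl, dimAI T (sI T)) (par eA eB))) /\
      (forall A B (Psi Phi : Mx T (sI T) (scomp T A B)),
          is_state Psi -> is_state Phi -> Psi <> Phi ->
          exists (a : Mx T A (sI T)) (b : Mx T B (sI T)),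
            [/\ a \in transf T A (sI T), b \in transf T B (sI T) &
              \tr (Psi *m castmx (erefl, dimAI T (sI T)) (par a b))
              <> \tr (Phi *m castmx (erefl, dimAI T (sI T)) (par a b))]) /\
      (forall A (x : Mx T (sI T) A),
          (forall eps : R, 0 < eps -> exists y, is_state y /\ forall i j, `|x i j - y i j| < eps) ->
          is_state x) /\
      (* (iii) not deterministic, hence convex: every binary coin exists *)
      ((exists c : Mx T (sI T) (sI T), c \in transf T (sI T) (sI T) /\ 0 < \tr c < 1) /\
       (forall q : R, 0 <= q <= 1 ->
          is_test [:: (q%:M : Mx T (sI T) (sI T)); (1 - q)%:M])) /\
      (exists A (rho sigma : Mx T (sI T) A) (a b : Mx T A (sI T)),
          [/\ normalized rho, normalized sigma, is_test [:: a; b],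
              \tr (rho *m a) = 1 & \tr (sigma *m b) = 1]).

(* Main.v *)
Require Import Defs.
From HB Require Import structures.
From mathcomp Require Import all_boot all_order all_algebra.
Import Order.TTheory GRing.Theory Num.Theory.
Local Open Scope ring_scope.

Lemma subseq_allpairs (S U V : eqType) (f : S -> U -> V) (s1 s2 : seq S) (t1 t2 : seq U) :
  subseq s1 s2 -> subseq t1 t2 ->
  subseq [seq f x y | x <- s1, y <- t1] [seq f x y | x <- s2, y <- t2].
Proof.
move=> + ht; elim: s2 s1 => [|x s2 IH] [|y s1] //=; rewrite ?sub0seq //.
have H0 : forall s, subseq [seq f x0 y0 | x0 <- s, y0 <- t1]
     ([seq f x y0 | y0 <- t2] ++ [seq f x0 y0 | x0 <- s2, y0 <- t2]) ->
     True by [].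
case: eqP => [-> hs|_ hs].
  by apply: cat_subseq; [apply: map_subseq | apply: IH].
have := IH (y :: s1) hs => /= h.
by rewrite -[X in subseq X _]cat0s; apply: cat_subseq; rewrite ?sub0seq.
Qed.

Lemma castmx_sum (R : realFieldType) m n m' n' (e : (m = m') * (n = n'))
  (s : seq 'M[R]_(m, n)) :
  \sum_(x <- map (castmx e) s) x = castmx e (\sum_(x <- s) x).
Proof.
case: e => e1 e2; subst m' n'; rewrite castmx_id map_id_in //.
Qed.

Lemma castmx_scale (R : realFieldType) m n m' n' (e : (m = m') * (n = n'))
  (a : R) (x : 'M[R]_(m, n)) : castmx e (a *: x) = a *: castmx e x.
Proof. by case: e => e1 e2; subst m' n'; rewrite !castmx_id. Qed.

Lemma test_cast (R : realFieldType) (T : OPT R) (X Y Z : sys T) (e : X = Y)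
  (cs : seq (Mx T X Z)) :
  is_test cs -> is_test (map (castmx (congr1 (Defs.dim T) e, erefl)) cs).
Proof.
case: Y / e => h.
by rewrite map_id_in // => x _; rewrite castmx_id.
Qed.

Section Lin.
Variables (R : realFieldType) (T : OPT R).
Hypothesis HO : OPT_axioms T.

Lemma parL_lin A B C D (a : R) (x y : Mx T A B) (z : Mx T C D) :
  par (a *: x + y) z = a *: par x z + par y z.
Proof. by case: HO => _ [_ [_ [_ [_ [_ [_ [_ [_ [_ [_ [h _]]]]]]]]]]]; apply: h. Qed.
Lemma parR_lin A B C D (a : R) (z : Mx T A B) (x y : Mx T C D) :
  par z (a *: x + y) = a *: par z x + par z y.
Proof. by case: HO => _ [_ [_ [_ [_ [_ [_ [_ [_ [_ [_ [_ [h _]]]]]]]]]]]]; apply: h. Qed.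

Lemma par0l A B C D (z : Mx T C D) : par (0 : Mx T A B) z = 0.
Proof.
have := @parL_lin A B C D 1 0 0 z; rewrite scaler0 addr0 scale1r => h.
by apply: (@addrI _ (par (0 : Mx T A B) z)); rewrite addr0 -h.
Qed.
Lemma par0r A B C D (z : Mx T A B) : par z (0 : Mx T C D) = 0.
Proof.
have := @parR_lin A B C D 1 z 0 0; rewrite scaler0 addr0 scale1r => h.
by apply: (@addrI _ (par z (0 : Mx T C D))); rewrite addr0 -h.
Qed.
Lemma parZl A B C D a (x : Mx T A B) (z : Mx T C D) : par (a *: x) z = a *: par x z.
Proof. by have := @parL_lin A B C D a x 0 z; rewrite addr0 par0l addr0. Qed.
Lemma parZr A B C D a (z : Mx T A B) (x : Mx T C D) : par z (a *: x) = a *: par z x.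
Proof. by have := @parR_lin A B C D a z x 0; rewrite addr0 par0r addr0. Qed.
Lemma parDl A B C D (x y : Mx T A B) (z : Mx T C D) : par (x + y) z = par x z + par y z.
Proof. by have := @parL_lin A B C D 1 x y z; rewrite !scale1r. Qed.
Lemma parDr A B C D (z : Mx T A B) (x y : Mx T C D) : par z (x + y) = par z x + par z y.
Proof. by have := @parR_lin A B C D 1 z x y; rewrite !scale1r. Qed.

Lemma par_sum A B C D (s : seq (Mx T A B)) (t : seq (Mx T C D)) :
  \sum_(w <- [seq par x y | x <- s, y <- t]) w = par (\sum_(x <- s) x) (\sum_(y <- t) y).
Proof.
elim: s => [|x s IH] /=; first by rewrite !big_nil par0l.
rewrite big_cat /= IH big_cons parDl; congr (_ + _).
clear IH; elim: t => [|y t IHt] /=; first by rewrite !big_nil par0r.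
by rewrite !big_cons IHt parDr.
Qed.
End Lin.

Lemma pow_refine (R : realFieldType) (T : OPT R) (HO : OPT_axioms T) (A : sys T)
  (L sL : seq (Mx T (sI T) A)) (rho rhoX : Mx T (sI T) A) (w : R) :
  is_test L -> subseq sL L -> \sum_(x <- sL) x = rho -> w *: rhoX \in sL ->
  forall n, exists ds sub : seq (Mx T (sI T) (tpow T A n.+1)),
    [/\ is_test ds, subseq sub ds, \sum_(x <- sub) x = spowS rho n &
        w ^+ n.+1 *: spowS rhoX n \in sub].
Proof.
move=> hL hsL hsum hw; elim=> [|n [ds [sub [hds hsub hs hin]]]].
  by exists L, sL; rewrite expr1.
have Hpar : forall A B C D (cs : seq (Mx T A B)) (ds : seq (Mx T C D)),
    is_test cs -> is_test ds -> is_test [seq par c d | c <- cs, d <- ds].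
  by case: HO => _ [_ [_ [_ [h _]]]].
exists (map (castmx (dimAI T (sI T), erefl)) [seq par x y | x <- L, y <- ds]).
exists (map (castmx (dimAI T (sI T), erefl)) [seq par x y | x <- sL, y <- sub]).
split.
- have := @test_cast _ T _ _ _ (compI T (sI T)) _ (Hpar _ _ _ _ _ _ hL hds).
  by [].
  
- by apply: map_subseq; apply: subseq_allpairs.
- by rewrite castmx_sum (@par_sum _ _ HO) hsum hs.
- rewrite /= /tens_state.
  have -> : w ^+ n.+2 *: castmx (dimAI T (sI T), erefl) (par rhoX (spowS rhoX n))
      = castmx (dimAI T (sI T), erefl) (par (w *: rhoX) (w ^+ n.+1 *: spowS rhoX n)).
    by rewrite (@parZl _ _ HO) (@parZr _ _ HO) scalerA castmx_scale -exprS.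
  by apply: map_f; apply: allpairs_f.
Qed.

Lemma mul_sum (R : realFieldType) m n k (s : seq 'M[R]_(m, n)) (t : seq 'M[R]_(n, k)) :
  \sum_(w <- [seq x *m y | x <- s, y <- t]) w = (\sum_(x <- s) x) *m (\sum_(y <- t) y).
Proof.
elim: s => [|x s IH] /=; first by rewrite !big_nil mul0mx.
rewrite big_cat /= IH big_cons mulmxDl; congr (_ + _).
clear IH; elim: t => [|y t IHt] /=; first by rewrite !big_nil mulmx0.
by rewrite !big_cons IHt mulmxDr.
Qed.

Lemma key (R : realFieldType) (T : OPT R) (HT : Framework T) (A B : sys T)
  (L sL : seq (Mx T (sI T) A)) (rho2 rhoX : Mx T (sI T) A) (w : R)
  (PsiX Psi2 : Mx T (sI T) (scomp T A B)) (n : nat) (C : Mx T (tpow T A n.+1) (scomp T A B)) :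
  w != 0 ->
  is_test L -> subseq sL L -> \sum_(x <- sL) x = rho2 -> w *: rhoX \in sL ->
  C \in transf T (tpow T A n.+1) (scomp T A B) ->
  spowS rhoX n *m C = PsiX -> spowS rho2 n *m C = Psi2 ->
  normalized PsiX -> normalized Psi2 -> pure_state Psi2 -> PsiX = Psi2.
Proof.
move=> w0 hL hsL hsum hw hC hX h2 nX n2 [_ hat].
have HO := HT.1.
have [ds [sub [hds hsub hs hin]]] := @pow_refine _ _ HO _ _ _ _ _ _ hL hsL hsum hw n.
have [csC [hcsC hCin]] : exists cs, is_test cs /\ C \in cs.
  by case: HO => _ [h _]; apply/h.
have Hseq : forall A B C (cs : seq (Mx T A B)) (ds : seq (Mx T B C)),
    is_test cs -> is_test ds -> is_test [seq c *m d | c <- cs, d <- ds].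
  by case: HO => _ [_ [_ [h _]]].
have [l [_ hl]] : exists l : R, 0 <= l <= 1 /\ w ^+ n.+1 *: PsiX = l *: Psi2.
  apply: hat; exists [seq c *m d | c <- ds, d <- csC]; split; first exact: Hseq.
  have : subseq [seq c *m d | c <- sub, d <- [:: C]] [seq c *m d | c <- ds, d <- csC].
    by apply: subseq_allpairs; rewrite ?sub1seq.
  case/subseqP=> m _ hm; exists m; rewrite -hm; split.
    by rewrite mul_sum big_seq1 hs.
  by rewrite -hX scalemxAl; apply: allpairs_f; rewrite ?mem_seq1.
have [e [he _]] := HT.2.1 (scomp T A B).
have tX := nX.2 e he; have t2 := n2.2 e he.
have : \tr ((w ^+ n.+1 *: PsiX) *m e) = \tr ((l *: Psi2) *m e) by rewrite hl.
rewrite -!scalemxAl !mxtraceZ tX t2 !mulr1 => hwl.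
have wn0 : w ^+ n.+1 != 0 by rewrite expf_neq0.
apply: (@scalerI _ _ (w ^+ n.+1)) => //.
by rewrite hl hwl.
Qed.

Theorem mainTheorem20 (R : realFieldType) (T : OPT R) (HT : Framework T)
  (A B : sys T) (rho1 rho2 rho3 : Mx T (sI T) A)
  (Psi1 Psi2 Psi3 : Mx T (sI T) (scomp T A B)) (p : R) :
  normalized rho1 -> normalized rho2 -> normalized rho3 ->
  rho1 <> rho3 -> 0 < p < 1 -> rho2 = p *: rho1 + (1 - p) *: rho3 ->
  purification rho1 Psi1 -> purification rho2 Psi2 -> purification rho3 Psi3 ->
  forall N : nat, (1 <= N)%N ->
  ~ (exists C : Mx T (tpow T A N) (scomp T A B),
       [/\ C \in transf T (tpow T A N) (scomp T A B),
           spow rho1 N *m C = Psi1,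
           spow rho2 N *m C = Psi2 &
           spow rho3 N *m C = Psi3]).
Proof.
move=> n1 n2 n3 r13 /andP[p0 p1] hr2 [nP1 [_ mP1]] [nP2 [pP2 _]] [nP3 [_ mP3]].
case=> [//|n] _ [C [hC h1 h2 h3]].
have HO := HT.1.
have Htr : forall A B (c : Mx T A B), c \in transf T A B <-> exists cs, is_test cs /\ c \in cs.
  by case: HO => _ [h _].
have [t1 [ht1 r1in]] := (Htr _ _ rho1).1 n1.1.
have [t3 [ht3 r3in]] := (Htr _ _ rho3).1 n3.1.
have Hcond : forall A B C (cs : seq (Mx T A B)) (ds : nat -> seq (Mx T B C)),
    is_test cs -> (forall i, (i < size cs)%N -> is_test (ds i)) ->
    is_test (flatten [seq [seq cs`_i *m d | d <- ds i] | i <- iota 0 (size cs)]).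
  by case: HO => _ [_ [_ [_ [_ [_ [h _]]]]]].
have hcoin : is_test [:: (p%:M : Mx T (sI T) (sI T)); (1 - p)%:M].
  by apply: HT.2.2.2.2.2.1.2; rewrite (ltW p0) (ltW p1).
set L := [seq (p%:M : Mx T (sI T) (sI T)) *m d | d <- t1] ++
         [seq ((1 - p)%:M : Mx T (sI T) (sI T)) *m d | d <- t3].
have hL : is_test L.
  have := Hcond _ _ _ _ (fun i => if i == 0%N then t1 else t3) hcoin.
  rewrite /= cats0; apply; case=> [|[|]] //.
set sL := [:: (p%:M : Mx T (sI T) (sI T)) *m rho1; ((1 - p)%:M : Mx T (sI T) (sI T)) *m rho3].
have hsL : subseq sL L.
  rewrite /sL -cat1s; apply: cat_subseq; rewrite sub1seq; exact: map_f.
have hsum : \sum_(x <- sL) x = rho2 by rewrite hr2 !big_cons big_nil addr0 !mul_scalar_mx.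
have e1 := @key _ _ HT _ _ _ _ _ _ _ _ _ _ _ (lt0r_neq0 p0) hL hsL hsum _ hC h1 h2 nP1 nP2 pP2.
have e3 := @key _ _ HT _ _ _ _ _ _ _ _ _ _ _ _ hL hsL hsum _ hC h3 h2 nP3 nP2 pP2.
apply: r13.
have [e [he _]] := HT.2.1 B.
have p1' : 1 - p != 0 by rewrite subr_eq0 eq_sym lt_eqF.
rewrite -(mP1 e he) -(mP3 e he) e1 ?(e3 (1 - p) p1') //.
all: by rewrite /sL !mul_scalar_mx !inE eqxx ?orbT.
Qed.
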